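(* Let $h>0$, assume $g$ satisfies (H), fix $c>0$, and let $\phi,\psi$ be two wavefront profiles of (1) with the same velocity $c$. If there is a finite $T$ such that $\phi(t)<\psi(t)$ for all $t<T$, then $\phi(t)<\psi(t)$ for all $t\in\mathbb{R}$.
   Context: Hypothesis (H): $g:\mathbb{R}_+\to\mathbb{R}_+$ is continuous and strictly increasing; $g(x)=x$ has exactly two nonnegative solutions $0$ and $\kappa>0$; $g$ is differentiable at $0,\kappa$ with $g'(0)>1$, $g'(\kappa)<1$; $g$ is $C^1$ near $\kappa$; and $|g(u)/u-g'(0)|\le Cu^\theta$ for $u\in(0,\delta]$ for some $C>0,\theta\in(0,1],\delta>0$. A wavefront profile with velocity $c$ is a $C^2$, positive, bounded, monotone function $\phi:\mathbb{R}\to\mathbb{R}$ with $\phi(-\infty)=0$, $\phi(+\infty)=\kappa$ and $\phi''(s)-c\phi'(s)-\phi(s)+g(\phi(s-ch))=0$ for all $s\in\mathbb{R}$ (so that $\phi(\nu\cdot x+ct)$ solves $u_t=\Delta u-u+g(u(t-h,x))$). *)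

(* Defs.v *)
From Stdlib Require Import Reals Lra.
Open Scope R_scope.

(* Right derivative of g at x equals l (g only defined on R_+, so the
   derivative at 0 is one-sided). *)
Definition right_derivable_lim (g : R -> R) (x l : R) : Prop :=
  forall eps : R, 0 < eps -> exists del : R, 0 < del /\
    forall u : R, 0 < u < del -> Rabs ((g (x + u) - g x) / u - l) < eps.

(* Hypothesis (H) on g : R_+ -> R_+ (values of g on negative reals are
   irrelevant), with kappa > 0 the positive fixed point. *)
Definition hyp_H (g : R -> R) (kappa : R) : Prop :=
  (forall x, 0 <= x -> 0 <= g x) /\
  (forall x, 0 <= x -> forall eps, 0 < eps -> exists del, 0 < del /\
      forall y, 0 <= y -> Rabs (y - x) < del -> Rabs (g y - g x) < eps) /\
  (forall x y, 0 <= x -> x < y -> g x < g y) /\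
  0 < kappa /\
  (forall x, 0 <= x -> (g x = x <-> (x = 0 \/ x = kappa))) /\
  (exists g0 : R, right_derivable_lim g 0 g0 /\ 1 < g0 /\
     exists C theta delta : R, 0 < C /\ 0 < theta <= 1 /\ 0 < delta /\
       forall u, 0 < u <= delta -> Rabs (g u / u - g0) <= C * Rpower u theta) /\
  (exists gk : R, derivable_pt_lim g kappa gk /\ gk < 1) /\
  (exists (dk : R) (g' : R -> R), 0 < dk /\
     (forall x, kappa - dk < x < kappa + dk -> derivable_pt_lim g x (g' x)) /\
     (forall x, kappa - dk < x < kappa + dk -> continuity_pt g' x)).

(* phi is a wavefront profile with velocity c for the delayed equation
   u_t = Delta u - u + g(u(t-h,x)). *)
Definition wavefront (g : R -> R) (kappa h c : R) (phi : R -> R) : Prop :=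
  (exists phi1 phi2 : R -> R,
     (forall s, derivable_pt_lim phi s (phi1 s)) /\
     (forall s, derivable_pt_lim phi1 s (phi2 s)) /\
     (forall s, continuity_pt phi2 s) /\
     (forall s, phi2 s - c * phi1 s - phi s + g (phi (s - c * h)) = 0)) /\
  (forall s, 0 < phi s) /\
  (exists M, forall s, Rabs (phi s) <= M) /\
  ((forall s t, s <= t -> phi s <= phi t) \/
   (forall s t, s <= t -> phi t <= phi s)) /\
  (forall eps, 0 < eps -> exists N, forall s, s <= N -> Rabs (phi s) < eps) /\
  (forall eps, 0 < eps -> exists N, forall s, N <= s -> Rabs (phi s - kappa) < eps).

(* Main.v *)
Require Import Defs.
From Stdlib Require Import Reals Lra Classical.
Open Scope R_scope.

Lemma cont_eps (f : R -> R) x : continuity_pt f x ->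
  forall e, 0 < e -> exists a, 0 < a /\ forall y, Rabs (y - x) < a -> Rabs (f y - f x) < e.
Proof.
  intros H e He.
  unfold continuity_pt, continue_in, limit1_in, limit_in in H. simpl in H.
  destruct (H e He) as [a [Ha Hy]]. exists a; split; [exact Ha|].
  intros y Hyx. destruct (Req_dec x y) as [<-|Hne].
  - unfold Rminus; rewrite Rplus_opp_r, Rabs_R0; exact He.
  - apply (Hy y). split; [split; [exact I| exact Hne] | exact Hyx].
Qed.

Lemma min_deriv (f f1 f2 : R -> R) m :
  (forall x, derivable_pt_lim f x (f1 x)) -> derivable_pt_lim f1 m (f2 m) ->
  (forall x, f m <= f x) -> f1 m = 0 /\ 0 <= f2 m.
Proof.
  intros Df Df1 Hmin.
  assert (H0 : f1 m = 0).
  { pose (pr := exist (fun l => derivable_pt_abs f m l) (f1 m) (Df m) : derivable_pt f m).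
    assert (E := deriv_minimum f (m-1) (m+1) m pr ltac:(lra) ltac:(lra) (fun x _ _ => Hmin x)).
    exact E. }
  split; [exact H0|].
  destruct (Rle_lt_dec 0 (f2 m)) as [Hle|Hlt]; [exact Hle|exfalso].
  destruct (Df1 (- f2 m / 2) ltac:(lra)) as [[d Hd] Hdel]. simpl in Hdel.
  assert (Hpos : forall k, -d < k < 0 -> 0 < f1 (m + k)).
  { intros k Hk. assert (Hk0 : k <> 0) by lra.
    assert (Hka : Rabs k < d) by (rewrite Rabs_left; lra).
    specialize (Hdel k Hk0 Hka). rewrite H0, Rminus_0_r in Hdel.
    apply Rabs_def2 in Hdel. destruct Hdel as [Ha Hb].
    assert (Hq : f1 (m+k) / k < 0) by lra.
    replace (f1 (m+k)) with ((f1 (m+k)/k) * k) by (field; exact Hk0). nra. }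
  destruct (MVT_cor2 f f1 (m - d/2) m ltac:(lra) (fun c _ => Df c)) as [xi [Hxi Hr]].
  assert (P := Hpos (xi - m) ltac:(lra)). replace (m + (xi - m)) with xi in P by ring.
  specialize (Hmin (m - d/2)). nra.
Qed.

Lemma min_exists (w : R -> R) t0 : (forall x, continuity_pt w x) ->
  (forall e, 0 < e -> exists N, forall s, s <= N -> Rabs (w s) < e) ->
  (forall e, 0 < e -> exists N, forall s, N <= s -> Rabs (w s) < e) ->
  w t0 < 0 -> exists m, forall x, w m <= w x.
Proof.
  intros Cw L1 L2 Ht.
  destruct (L1 (- w t0) ltac:(lra)) as [N1 H1].
  destruct (L2 (- w t0) ltac:(lra)) as [N2 H2].
  destruct (continuity_ab_min w (Rmin N1 t0) (Rmax N2 t0)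
     ltac:(unfold Rmin, Rmax; repeat destruct Rle_dec; lra) (fun c _ => Cw c)) as [mx [Hmx Hb]].
  assert (Hm0 : w mx <= w t0) by (apply Hmx; unfold Rmin, Rmax; repeat destruct Rle_dec; lra).
  exists mx. intros x.
  destruct (Rlt_le_dec x (Rmin N1 t0)) as [Hx|Hx].
  - assert (x <= N1) by (unfold Rmin in Hx; destruct Rle_dec; lra).
    specialize (H1 x H). apply Rabs_def2 in H1. lra.
  - destruct (Rle_lt_dec x (Rmax N2 t0)) as [Hx2|Hx2].
    + apply Hmx; lra.
    + assert (N2 <= x) by (unfold Rmax in Hx2; destruct Rle_dec; lra).
      specialize (H2 x H). apply Rabs_def2 in H2. lra.
Qed.

Lemma der_cont (f f' : R -> R) : (forall x, derivable_pt_lim f x (f' x)) -> forall x, continuity_pt f x.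
Proof. intros D x. apply derivable_continuous_pt. exact (exist _ (f' x) (D x)). Qed.

Lemma der_shift (f f' : R -> R) a x : derivable_pt_lim f (x + a) (f' (x + a)) ->
  derivable_pt_lim (fun t => f (t + a)) x (f' (x + a)).
Proof.
  intros D e He. destruct (D e He) as [d Hd]. exists d. intros k Hk Hka.
  replace (x + k + a) with (x + a + k) by ring. apply Hd; assumption.
Qed.

Lemma at_min (g : R -> R) (c h : R) (p p1 p2 q q1 q2 : R -> R) m :
  (forall s, derivable_pt_lim p s (p1 s)) -> (forall s, derivable_pt_lim p1 s (p2 s)) ->
  (forall s, p2 s - c * p1 s - p s + g (p (s - c * h)) = 0) ->
  (forall s, derivable_pt_lim q s (q1 s)) -> (forall s, derivable_pt_lim q1 s (q2 s)) ->
  (forall s, q2 s - c * q1 s - q s + g (q (s - c * h)) = 0) ->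
  (forall x, q m - p m <= q x - p x) ->
  g (q (m - c * h)) - g (p (m - c * h)) <= q m - p m.
Proof.
  intros Dp Dp1 Ep Dq Dq1 Eq Hm.
  destruct (min_deriv (fun x => q x - p x) (fun x => q1 x - p1 x) (fun x => q2 x - p2 x) m)
    as [H1 H2].
  - intros x. exact (derivable_pt_lim_minus q p x _ _ (Dq x) (Dp x)).
  - exact (derivable_pt_lim_minus q1 p1 m _ _ (Dq1 m) (Dp1 m)).
  - exact Hm.
  - specialize (Ep m); specialize (Eq m). nra.
Qed.

Lemma nondecr (phi : R -> R) kappa : 0 < kappa ->
  ((forall s t, s <= t -> phi s <= phi t) \/ (forall s t, s <= t -> phi t <= phi s)) ->
  (forall eps, 0 < eps -> exists N, forall s, s <= N -> Rabs (phi s) < eps) ->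
  (forall eps, 0 < eps -> exists N, forall s, N <= s -> Rabs (phi s - kappa) < eps) ->
  (forall s t, s <= t -> phi s <= phi t) /\ (forall s, phi s <= kappa).
Proof.
  intros Hk [Hm|Hm] L0 LK.
  - split; [exact Hm|]. intros s.
    destruct (Rle_lt_dec (phi s) kappa) as [H|H]; [exact H|exfalso].
    destruct (LK (phi s - kappa) ltac:(lra)) as [N HN].
    specialize (HN (Rmax N s) (Rmax_l _ _)). specialize (Hm s (Rmax N s) (Rmax_r _ _)).
    apply Rabs_def2 in HN. lra.
  - exfalso.
    destruct (L0 (kappa/2) ltac:(lra)) as [N1 H1].
    destruct (LK (kappa/2) ltac:(lra)) as [N2 H2].
    specialize (H1 (Rmin N1 N2) (Rmin_l _ _)). specialize (H2 (Rmax N1 N2) (Rmax_r _ _)).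
    assert (Rmin N1 N2 <= Rmax N1 N2) by (unfold Rmin, Rmax; repeat destruct Rle_dec; lra).
    specialize (Hm _ _ H).
    apply Rabs_def2 in H1. apply Rabs_def2 in H2. lra.
Qed.

Lemma contraction (g : R -> R) kappa :
  (exists gk : R, derivable_pt_lim g kappa gk /\ gk < 1) ->
  (exists (dk : R) (g' : R -> R), 0 < dk /\
     (forall x, kappa - dk < x < kappa + dk -> derivable_pt_lim g x (g' x)) /\
     (forall x, kappa - dk < x < kappa + dk -> continuity_pt g' x)) ->
  exists d, 0 < d /\ forall u v, kappa - d <= u -> u < v -> v <= kappa -> g v - g u < v - u.
Proof.
  intros [gk [Dk Hgk]] [dk [g' [Hdk [Dg Cg]]]].
  assert (E : g' kappa = gk).
  { apply (uniqueness_limite g kappa); [apply Dg; lra | exact Dk]. }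
  destruct (cont_eps g' kappa (Cg kappa ltac:(lra)) (1 - gk) ltac:(lra)) as [al [Hal Hc]].
  exists (Rmin al dk / 2). split.
  { unfold Rmin; destruct Rle_dec; lra. }
  intros u v Hu Huv Hv.
  assert (Hm1 : Rmin al dk <= al) by apply Rmin_l.
  assert (Hm2 : Rmin al dk <= dk) by apply Rmin_r.
  assert (Hm0 : 0 < Rmin al dk) by (unfold Rmin; destruct Rle_dec; lra).
  destruct (MVT_cor2 g g' u v Huv) as [xi [Hr Hxi]].
  { intros c Hc'. apply Dg. lra. }
  assert (Hx : Rabs (xi - kappa) < al) by (apply Rabs_def1; lra).
  specialize (Hc xi Hx). apply Rabs_def2 in Hc. rewrite E in Hc.
  rewrite Hr. nra.
Qed.

Theorem mainTheorem4 (g : R -> R) (kappa h c : R) (phi psi : R -> R) :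
  0 < h -> hyp_H g kappa -> 0 < c ->
  wavefront g kappa h c phi -> wavefront g kappa h c psi ->
  (exists T : R, forall t, t < T -> phi t < psi t) ->
  forall t : R, phi t < psi t.
Proof.
  intros Hh HH Hc Wp Wq [T HT].
  destruct Wp as [[p1 [p2 [Dp [Dp1 [_ Ep]]]]] [Ppos [_ [Mp [Lp0 LpK]]]]].
  destruct Wq as [[q1 [q2 [Dq [Dq1 [_ Eq]]]]] [Qpos [_ [Mq [Lq0 LqK]]]]].
  destruct HH as [Hg0 [_ [Hginc [Hk [_ [_ [Hgk Hg']]]]]]].
  destruct (nondecr phi kappa Hk Mp Lp0 LpK) as [Ip Bp].
  destruct (nondecr psi kappa Hk Mq Lq0 LqK) as [Iq Bq].
  destruct (contraction g kappa Hgk Hg') as [d [Hd Hcon]].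
  set (p := phi) in *. set (q := psi) in *.
  assert (gle : forall x y, 0 < x -> x <= y -> g x <= g y).
  { intros x y Hx Hxy. destruct (Req_dec x y) as [<-|Hne]; [lra|].
    left; apply Hginc; lra. }
  assert (shiftpos : forall a t, 0 <= a -> t < T -> p t < q (t + a)).
  { intros a t Ha Ht. specialize (HT t Ht). specialize (Iq t (t + a) ltac:(lra)). lra. }
  assert (Cq := der_cont q q1 Dq).
  assert (atm : forall a m, (forall x, q (m + a) - p m <= q (x + a) - p x) ->
      g (q (m - c * h + a)) - g (p (m - c * h)) <= q (m + a) - p m).
  { intros a m Hm.
    apply (at_min g c h p p1 p2 (fun t => q (t + a)) (fun t => q1 (t + a)) (fun t => q2 (t + a)) m
      Dp Dp1 Ep).
    - intros s; apply der_shift; apply Dq.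
    - intros s; apply der_shift; apply Dq1.
    - intros s. specialize (Eq (s + a)). replace (s - c * h + a) with (s + a - c * h) by ring. exact Eq.
    - exact Hm. }
  assert (minex : forall a t0, q (t0 + a) - p t0 < 0 ->
      exists m, forall x, q (m + a) - p m <= q (x + a) - p x).
  { intros a t0 Ht0.
    apply (min_exists (fun x => q (x + a) - p x) t0); [| | |exact Ht0].
    - apply (der_cont _ (fun x => q1 (x + a) - p1 x)). intros x.
      apply (derivable_pt_lim_minus (fun t => q (t + a)) p x).
      + apply der_shift; apply Dq.
      + apply Dp.
    - intros e He. destruct (Lp0 (e/2) ltac:(lra)) as [N1 H1].
      destruct (Lq0 (e/2) ltac:(lra)) as [N2 H2].
      exists (Rmin N1 (N2 - a)). intros s Hs.
      assert (s <= N1) by (eapply Rle_trans; [exact Hs| apply Rmin_l]).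
      assert (s + a <= N2) by (assert (Rmin N1 (N2 - a) <= N2 - a) by apply Rmin_r; lra).
      specialize (H1 s H). specialize (H2 _ H0).
      apply Rabs_def2 in H1. apply Rabs_def2 in H2. apply Rabs_def1; lra.
    - intros e He. destruct (LpK (e/2) ltac:(lra)) as [N1 H1].
      destruct (LqK (e/2) ltac:(lra)) as [N2 H2].
      exists (Rmax N1 (N2 - a)). intros s Hs.
      assert (N1 <= s) by (eapply Rle_trans; [apply Rmax_l| exact Hs]).
      assert (N2 <= s + a) by (assert (N2 - a <= Rmax N1 (N2 - a)) by apply Rmax_r; lra).
      specialize (H1 s H). specialize (H2 _ H0).
      apply Rabs_def2 in H1. apply Rabs_def2 in H2. apply Rabs_def1; lra. }
  assert (nonneg : forall a S, 0 <= a -> (forall s, S <= s -> kappa - d <= q (s + a)) ->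
      (forall s, T <= s -> s < S -> p s <= q (s + a)) -> forall t, p t <= q (t + a)).
  { intros a S Ha H1 H2 t.
    destruct (Rle_lt_dec (p t) (q (t + a))) as [Hl|Hl]; [exact Hl|exfalso].
    destruct (minex a t ltac:(lra)) as [m Hm].
    assert (Hw := Hm t). assert (F := atm a m Hm).
    assert (Hlt : q (m - c * h + a) < p (m - c * h)).
    { destruct (Rlt_le_dec (q (m - c * h + a)) (p (m - c * h))) as [X|X]; [exact X|].
      assert (Y := gle _ _ (Ppos _) X). lra. }
    destruct (Rlt_le_dec (m - c * h) T) as [X|X].
    { specialize (shiftpos a _ Ha X). lra. }
    destruct (Rlt_le_dec (m - c * h) S) as [Y|Y].
    { specialize (H2 _ X Y). lra. }
    specialize (H1 _ Y). specialize (Hcon _ _ H1 Hlt (Bp _)).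
    specialize (Hm (m - c * h)). lra. }
  assert (strict : forall a, 0 <= a -> (forall t, p t <= q (t + a)) -> forall t, p t < q (t + a)).
  { intros a Ha Hall t.
    destruct (Rlt_le_dec (p t) (q (t + a))) as [X|X]; [exact X|exfalso].
    assert (Z : forall n, q (t - INR n * (c * h) + a) - p (t - INR n * (c * h)) = 0).
    { induction n as [|n IH].
      - simpl. replace (t - 0 * (c * h)) with t by ring. specialize (Hall t). lra.
      - set (x := t - INR n * (c * h)) in *.
        assert (Hm : forall y, q (x + a) - p x <= q (y + a) - p y).
        { intros y. specialize (Hall y). lra. }
        assert (F := atm a x Hm).
        replace (t - INR (S n) * (c * h)) with (x - c * h) by (unfold x; rewrite S_INR; ring).
        assert (Hle : q (x - c * h + a) <= p (x - c * h)).
        { destruct (Rle_lt_dec (q (x - c * h + a)) (p (x - c * h))) as [Y|Y]; [exact Y|].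
          assert (Y2 := Hginc _ _ (Rlt_le _ _ (Ppos _)) Y). lra. }
        specialize (Hall (x - c * h)). lra. }
    destruct (INR_unbounded ((t - T) / (c * h))) as [n Hn].
    assert (Hch : 0 < c * h) by nra.
    assert (Hlt : t - INR n * (c * h) < T).
    { apply Rmult_gt_compat_r with (r := c * h) in Hn; [|exact Hch].
      unfold Rdiv in Hn. rewrite Rmult_assoc, Rinv_l in Hn by lra. lra. }
    specialize (shiftpos a _ Ha Hlt). specialize (Z n). lra. }
  destruct (LqK d Hd) as [N HN].
  set (a0 := Rmax 0 (N - T)).
  assert (A0 : forall t, p t <= q (t + a0)).
  { apply (nonneg a0 T (Rmax_l _ _)).
    - intros s Hs. assert (N - T <= a0) by apply Rmax_r.
      specialize (HN (s + a0) ltac:(lra)). apply Rabs_def2 in HN. lra.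
    - intros s H1 H2; lra. }
  assert (up : forall a b, a <= b -> (forall t, p t <= q (t + a)) -> forall t, p t <= q (t + b)).
  { intros a b Hab Ha t. specialize (Ha t). specialize (Iq (t + a) (t + b) ltac:(lra)). lra. }
  intros t.
  destruct (Classical_Prop.classic (forall t, p t <= q (t + 0))) as [A00|NA0].
  { specialize (strict 0 (Rle_refl 0) A00 t). rewrite Rplus_0_r in strict. exact strict. }
  set (E := fun x => 0 <= x /\ ~ (forall t, p t <= q (t + x))).
  assert (bE : bound E).
  { exists a0. intros x [Hx0 Hx]. destruct (Rle_lt_dec x a0) as [Y|Y]; [exact Y|].
    exfalso; apply Hx. apply (up a0 x (Rlt_le _ _ Y) A0). }
  destruct (completeness E bE (ex_intro _ 0 (conj (Rle_refl 0) NA0))) as [as_ [Hub Hlub]].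
  assert (as0 : 0 <= as_) by (apply Hub; split; [lra| exact NA0]).
  assert (Aas : forall t, p t <= q (t + as_)).
  { intros t'. destruct (Rle_lt_dec (p t') (q (t' + as_))) as [Y|Y]; [exact Y|exfalso].
    destruct (cont_eps q (t' + as_) (Cq _) (p t' - q (t' + as_)) ltac:(lra)) as [et [Het Hc']].
    assert (Ex : E (as_ + et / 2)).
    { split; [lra|]. intros Hall. specialize (Hall t').
      assert (Rabs (t' + (as_ + et / 2) - (t' + as_)) < et) by (apply Rabs_def1; lra).
      specialize (Hc' _ H). apply Rabs_def2 in Hc'. lra. }
    specialize (Hub _ Ex). lra. }
  assert (Sas := strict as_ as0 Aas).
  destruct (Req_dec as_ 0) as [Z|Z].
  { specialize (Sas t). rewrite Z, Rplus_0_r in Sas. exact Sas. }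
  exfalso.
  set (S := Rmax T N).
  assert (TS : T <= S) by apply Rmax_l.
  destruct (continuity_ab_min (fun s => q (s + as_) - p s) T S TS) as [mx [Hmx Hbx]].
  { intros x _. apply (der_cont _ (fun x => q1 (x + as_) - p1 x)). intros y.
    apply (derivable_pt_lim_minus (fun t => q (t + as_)) p y).
    + apply der_shift; apply Dq.
    + apply Dp. }
  set (del := q (mx + as_) - p mx).
  assert (Hdel : 0 < del) by (specialize (Sas mx); unfold del; lra).
  destruct (Heine q (fun x => T <= x <= S + as_) (compact_P3 _ _) (fun x _ => Cq x)
    (mkposreal del Hdel)) as [[eta Heta] Hu]. simpl in Hu.
  set (a' := Rmax 0 (as_ - eta / 2)).
  assert (a'0 : 0 <= a') by apply Rmax_l.
  assert (a'1 : as_ - eta / 2 <= a') by apply Rmax_r.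
  assert (a'2 : a' < as_) by (unfold a', Rmax; destruct Rle_dec; lra).
  assert (Aa' : forall t, p t <= q (t + a')).
  { apply (nonneg a' S a'0).
    - intros s Hs. assert (N <= S) by apply Rmax_r.
      specialize (HN (s + a') ltac:(lra)). apply Rabs_def2 in HN. lra.
    - intros s Hs1 Hs2.
      assert (Rabs (s + a' - (s + as_)) < eta) by (apply Rabs_def1; lra).
      specialize (Hu (s + a') (s + as_) ltac:(lra) ltac:(lra) H).
      apply Rabs_def2 in Hu. specialize (Hmx s ltac:(lra)). simpl in Hmx.
      unfold del in Hu. lra. }
  assert (as_ <= a').
  { apply Hlub. intros x [Hx0 Hx]. destruct (Rle_lt_dec x a') as [Y|Y]; [exact Y|].
    exfalso; apply Hx. apply (up a' x (Rlt_le _ _ Y) Aa'). }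
  lra.
Qed.
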